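(* Let $k<l$ be positive integers and $\gamma\in PU(k,l)$. Then $\gamma$ has a fixed point in the closure $\overline{\mathbb{H}^{k,l}_{\mathbb{C}}}$ of $\mathbb{H}^{k,l}_{\mathbb{C}}$ in $\mathbb{P}^{k+l-1}_{\mathbb{C}}$.
   Context: $\mathbb{C}^{k,l}$ is $\mathbb{C}^{k+l}$ with the Hermitian form $\prec u,v\succ_{k,l}=-\sum_{j=1}^k u_j\bar v_j+\sum_{j=k+1}^{k+l}u_j\bar v_j$; $N_-^{k,l}$ is the set of vectors $v$ with $\prec v,v\succ_{k,l}<0$; $\mathbb{H}^{k,l}_{\mathbb{C}}=[N_-^{k,l}]\subset\mathbb{P}^{k+l-1}_{\mathbb{C}}$. $U(k,l)\subset GL(k+l,\mathbb{C})$ is the group preserving the form and $PU(k,l)$ its image in $PSL(k+l,\mathbb{C})$. The paper assumes $k<l$ throughout when using this notation. *)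

(* Defs.v *)
From HB Require Import structures.
From mathcomp Require Import all_boot all_order all_algebra.
From mathcomp Require Import complex.
From mathcomp Require Import all_classical all_reals all_analysis.
Set Implicit Arguments. Unset Strict Implicit. Unset Printing Implicit Defensive.
Import Order.TTheory GRing.Theory Num.Theory.
Import numFieldNormedType.Exports.
Local Open Scope ring_scope.
Local Open Scope classical_set_scope.

(** The complex numbers, as R[i] for a real type R, viewed through the
    regular-algebra alias ^o so that it carries its standard (norm)
    topology; column vectors 'cV[Cx R]_n then carry the product
    (= Euclidean) topology. *)
Definition Cx (R : realType) := (R[i])^o.

Definition hform (R : realType) (k l : nat) (u v : 'cV[Cx R]_(k + l)) : Cx R :=
  \sum_(j < k + l)
     ((if (j < k)%N then -1 else 1) * (u j 0 * ((v j 0 : R[i])^*)%C)).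

Definition Nminus (R : realType) (k l : nat) : set 'cV[Cx R]_(k + l) :=
  [set v | hform v v < 0].

Definition in_U (R : realType) (k l : nat) (g : 'M[Cx R]_(k + l)) : Prop :=
  g \in unitmx /\ forall u v, hform (g *m u) (g *m v) = hform u v.

Definition saturated (R : realType) (n : nat) (O : set 'cV[Cx R]_n) : Prop :=
  forall (c : Cx R) v, c != 0 -> O v -> O (c *: v).

(** [v] (v <> 0) lies in the closure of [A] in P^{n-1}(C), where P^{n-1}(C)
    carries the quotient topology of C^n \ {0}: every open subset of
    P^{n-1}(C) containing [v] meets [A].  Open subsets of P^{n-1}(C)
    correspond exactly to saturated open subsets of C^n not containing 0. *)
Definition in_proj_closure (R : realType) (n : nat) (A : set 'cV[Cx R]_n)
    (v : 'cV[Cx R]_n) : Prop :=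
  v != 0 /\
  forall O : set 'cV[Cx R]_n, open O -> ~ O 0 -> saturated O -> O v ->
    exists w, O w /\ A w.

Definition proj_fixed (R : realType) (n : nat) (g : 'M[Cx R]_n)
    (v : 'cV[Cx R]_n) : Prop :=
  v != 0 /\ exists lam : Cx R, g *m v = lam *: v.

(* Main.v *)
Require Import Defs.
From HB Require Import structures.
From mathcomp Require Import all_boot all_order all_algebra.
From mathcomp Require Import complex.
From mathcomp Require Import all_classical all_reals all_analysis.
From mathcomp Require Import ring lra.
Import Order.TTheory GRing.Theory Num.Theory.
Import numFieldNormedType.Exports.
Local Open Scope ring_scope.
Local Open Scope classical_set_scope.
Set Implicit Arguments. Unset Strict Implicit. Unset Printing Implicit Defensive.
Section Hf.
Variables (R : realType) (k l : nat).
Local Notation C := (Cx R).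
Local Notation n := (k + l)%N.
Implicit Types (u v w : 'cV[C]_n) (a : C).
Definition sg (j : 'I_n) : C := if (j < k)%N then -1 else 1.
Lemma sg_conj j : Num.conj (sg j) = sg j.
Proof. by rewrite /sg; case: ifP; rewrite ?rmorphN rmorph1. Qed.

Lemma hformE u v :
  hform u v = \sum_j sg j * (u j 0 * Num.conj (v j 0)).
Proof. by []. Qed.

Lemma hformDl u v w : hform (u + v) w = hform u w + hform v w.
Proof.
rewrite !hformE -big_split; apply: eq_bigr => j _; rewrite !mxE.
by rewrite mulrDl mulrDr.
Qed.
Lemma hformZl a u w : hform (a *: u) w = a * hform u w.
Proof.
rewrite !hformE mulr_sumr; apply: eq_bigr => j _; rewrite !mxE.
by rewrite mulrCA !mulrA (mulrAC a).
Qed.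
Lemma hformC u v : hform v u = Num.conj (hform u v).
Proof.
rewrite !hformE rmorph_sum; apply: eq_bigr => j _.
by rewrite !rmorphM /= sg_conj conjCK (mulrC (v j 0)).
Qed.
Lemma hformDr u v w : hform w (u + v) = hform w u + hform w v.
Proof. by rewrite hformC hformDl rmorphD /= -!hformC. Qed.
Lemma hformZr a u w : hform w (a *: u) = Num.conj a * hform w u.
Proof. by rewrite hformC hformZl rmorphM /= -!hformC. Qed.
Lemma hformNl u w : hform (- u) w = - hform u w.
Proof. by rewrite -scaleN1r hformZl mulN1r. Qed.
Lemma hformNr u w : hform w (- u) = - hform w u.
Proof. by rewrite -scaleN1r hformZr rmorphN1 mulN1r. Qed.
Lemma hform_real u : hform u u \is Num.real.
Proof. by rewrite CrealE -hformC. Qed.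
End Hf.
Section Step.
Variables (R : realType) (k l : nat).
Local Notation C := (Cx R).
Local Notation n := (k + l)%N.
Implicit Types (u v w x : 'cV[C]_n) (a : C).
Lemma conj_real_id (p : C) : p \is Num.real -> Num.conj p = p.
Proof. by rewrite CrealE => /eqP. Qed.

Lemma proj_neg w x : 0 < hform x x -> hform w w < 0 ->
  hform (w - (hform w x / hform x x) *: x) x = 0 /\
  hform (w - (hform w x / hform x x) *: x) (w - (hform w x / hform x x) *: x) < 0.
Proof.
move=> px nw; set p := hform x x in px *; set q := hform w x.
have p0 : p != 0 by rewrite gt_eqF.
split; first by rewrite hformDl hformNl hformZl -/q -/p mulfVK // subrr.
rewrite !(hformDl, hformDr, hformNl, hformNr, hformZl, hformZr) -/p -/q.
have hxw : hform x w = Num.conj q by exact: hformC.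
have cp : Num.conj p = p by apply: conj_real_id; apply: hform_real.
rewrite hxw rmorphM /= fmorphV /= cp.
set cq := Num.conj q.
have -> : hform w w - cq / p * q + (- (q / p * cq) - q / p * - (cq / p * p)) =
          hform w w - q * cq / p by field.
rewrite ltrBlDr (lt_le_trans nw) // ler_wpDr // divr_ge0 ?mul_conjC_ge0 ?ltW //.
Qed.
End Step.
Section Ind.
Variables (R : realType) (k l : nat).
Local Notation C := (Cx R).
Local Notation n := (k + l)%N.

Lemma eig_in (f V : 'M[C]_n) : (V *m f <= V)%MS -> (0 < \rank V)%N ->
  exists a (x : 'rV[C]_n), [/\ x != 0, (x <= V)%MS & x *m f = a *: x].
Proof.
move=> st r0; have [a ea] := @Theorem7' R _ (complex.restrict V f) r0.
move/eigenvalueP: ea => [x' hx' x'0].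
exists a, (x' *m row_base V); split.
- by rewrite mul_mx_rowfree_eq0 ?row_base_free.
- by rewrite (submx_trans (submxMl _ _)) // eq_row_base.
- by apply/eigenspaceP; rewrite -eigenspace_restrict //; apply/eigenspaceP.
Qed.

Lemma hform00 : hform (0 : 'cV[C]_n) 0 = 0.
Proof. by rewrite hformE big1 // => j _; rewrite mxE mul0r mulr0. Qed.

Definition cvec (x : 'rV[C]_n) : 'cV[C]_n := \col_j (@sg R k l j * Num.conj (x 0 j)).

Lemma sub_ker_cvec (x y : 'rV[C]_n) :
  (y <= kermx (cvec x))%MS = (hform y^T x^T == 0).
Proof.
rewrite sub_kermx; apply/eqP/eqP => H.
  have := congr1 (fun (M : 'M[C]_1) => M 0 0) H; rewrite !mxE hformE => h; rewrite -[X in _ = X]h.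
  by apply: eq_bigr => j _; rewrite !mxE mulrCA.
apply/matrixP => i j; rewrite !ord1 !mxE -[X in _ = X]H hformE.
by apply: eq_bigr => j' _; rewrite !mxE mulrCA.
Qed.

Lemma trmxZ' (a : C) (x : 'rV[C]_n) : (a *: x)^T = a *: x^T.
Proof. by apply/matrixP => i j; rewrite !mxE. Qed.
Lemma trmxB' (y x : 'rV[C]_n) : (y - x)^T = y^T - x^T.
Proof. by apply/matrixP => i j; rewrite !mxE. Qed.

Lemma main_ind (g : 'M[C]_n) (hg : in_U g) : forall m (V : 'M[C]_n),
  (\rank V < m)%N -> (V *m g^T <= V)%MS ->
  (exists w : 'rV[C]_n, (w <= V)%MS /\ hform w^T w^T < 0) ->
  exists x : 'rV[C]_n, [/\ x != 0, exists a, x *m g^T = a *: x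
                                 & ~ (0 < hform x^T x^T)].
Proof.
case: hg => gU gH.
elim => [//|m IH] V rV st [w [wV wn]].
have w0 : w != 0.
  by apply: contraTneq wn => ->; rewrite trmx0 hform00 ltxx.
have r0 : (0 < \rank V)%N.
  rewrite lt0n mxrank_eq0; apply: contraNneq w0 => V0.
  by move: wV; rewrite V0 submx0.
have [a [x [x0 xV ex]]] := eig_in st r0.
have [px|px] := boolP (0 < hform x^T x^T); last first.
  by exists x; split => //; [exists a | apply/negP].
have gx : g *m x^T = a *: x^T by rewrite -[g]trmxK -trmx_mul ex trmxZ'.
have a0 : a != 0.
  apply: contraNneq x0 => a0; move: gx; rewrite a0 scale0r => /(congr1 (mulmx (invmx g))).
  rewrite mulKmx // mulmx0 => /eqP; by rewrite -trmx0 (inj_eq trmx_inj).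
set V' := (V :&: kermx (cvec x))%MS.
have xnot : ~~ (x <= kermx (cvec x))%MS by rewrite sub_ker_cvec gt_eqF.
have rV' : (\rank V' < \rank V)%N.
  apply: rank_ltmx; rewrite ltmxE capmxSl /=; apply: contra xnot => VV'.
  by apply: submx_trans (capmxSr _ _); apply: submx_trans VV'.
have hyp : forall y : 'rV[C]_n, (y <= V')%MS -> (y *m g^T <= V')%MS.
  move=> y; rewrite !sub_capmx => /andP [yV yk]; apply/andP; split.
    exact: submx_trans (submxMr _ yV) st.
  rewrite sub_ker_cvec trmx_mul trmxK.
  have -> : x^T = g *m (a^-1 *: x^T) by rewrite -scalemxAr gx scalerA mulVf ?scale1r.
  by rewrite gH hformZr; move: yk; rewrite sub_ker_cvec => /eqP ->; rewrite mulr0.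
apply: (IH V').
- exact: leq_trans rV' rV.
- apply/row_subP => i; rewrite row_mul; apply: hyp; exact: row_sub.
set q := hform w^T x^T; set p := hform x^T x^T.
have [h1 h2] := proj_neg px wn.
exists (w - (q / p) *: x); split; last by rewrite trmxB' trmxZ'.
rewrite sub_capmx sub_ker_cvec trmxB' trmxZ' h1 eqxx andbT.
by rewrite addmx_sub // -scaleNr scalemx_sub.
Qed.
End Ind.
Section Clo.
Variables (R : realType) (k l : nat).
Local Notation C := (Cx R).
Local Notation n := (k + l)%N.

Lemma huu (i0 : 'I_n) : (i0 < k)%N ->
  hform (delta_mx i0 0 : 'cV[C]_n) (delta_mx i0 0) = -1.
Proof.
move=> hi; rewrite hformE (bigD1 i0) //= big1 ?addr0.
  by rewrite !mxE !eqxx /= rmorph_nat /sg hi !mul1r mulr1.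
by move=> j /negbTE hj; rewrite !mxE hj /= !mul0r mulr0.
Qed.

Lemma neg_near (v z : 'cV[C]_n) (O : set 'cV[C]_n) :
  open O -> O v -> exists t : C, 0 < t /\ O (v + t *: z).
Proof.
move=> oO Ov.
pose f := fun s : C => v + s *: z.
have cf : f @ (0 : C) --> v.
  have -> : v = v + 0 *: z by rewrite scale0r addr0.
  have h2 : (fun s : C => s *: z) @ (0 : C) --> 0 *: z.
    exact: (@scalel_continuous C _ z 0).
  have h1 : (fun s : C => v) @ (0 : C) --> v.
    exact: (@cvg_cst _ v C (nbhs (0:C)) _).
  exact: (cvgD h1 h2).
have : nbhs (0 : C) (f @^-1` O).
  by apply: cf; apply: open_nbhs_nbhs; split.
move=> /nbhs_ballP [e /= e0 sub].
exists (e / 2); split; first by rewrite divr_gt0.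
apply: sub; rewrite -ball_normE /= sub0r normrN ger0_norm; last first.
  by rewrite divr_ge0 // ltW.
by rewrite ltr_pdivrMr // ltr_pMr // ltr1n.
Qed.
End Clo.
Section Fin.
Variables (R : realType) (k l : nat).
Local Notation C := (Cx R).
Local Notation n := (k + l)%N.

Lemma closure_lem (hk : (0 < k)%N) (v : 'cV[C]_n) : v != 0 -> ~ (0 < hform v v) ->
  in_proj_closure (@Nminus R k l) v.
Proof.
move=> v0 hv; split => // O oO _ _ Ov.
have : hform v v <= 0.
  by rewrite real_leNgt ?hform_real ?real0 //; apply/negP.
rewrite le_eqVlt => /orP [/eqP h0 | hn]; last by exists v.
pose i0 : 'I_n := Ordinal (ltn_addr l hk).
pose u : 'cV[C]_n := delta_mx i0 0.
have hu : hform u u = -1 by apply: huu.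
set c := hform v u.
have hcu : hform u v = Num.conj c by exact: hformC.
have key : forall s : C, hform (v + s *: u) (v + s *: u) =
    s * Num.conj c + Num.conj s * c - s * Num.conj s.
  move=> s; rewrite !(hformDl, hformDr, hformZl, hformZr) h0 hu hcu -/c.
  ring.
pose d : C := if c == 0 then 1 else - c.
have [t [t0 Ot]] := neg_near (d *: u) oO Ov.
exists (v + t *: (d *: u)); split => //.
rewrite /Nminus /= scalerA key rmorphM /= (conj_real_id (gtr0_real t0)) /d.
case: eqP => [c0 | /eqP c0].
  rewrite c0 rmorph0 rmorph1 !mulr0 !mulr1 !add0r oppr_lt0.
  exact: mulr_gt0.
rewrite !rmorphN /=.
have -> : t * - c * Num.conj c + t * - Num.conj c * c - t * - c * (t * - Num.conj c)
   = - ((t *+ 2 + t * t) * (c * Num.conj c)) by ring.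
rewrite oppr_lt0 mulr_gt0 ?mul_conjC_gt0 //.
by rewrite addr_gt0 ?mulr_gt0 ?pmulrn_rgt0.
Qed.
End Fin.

Theorem mainTheorem13 (R : realType) (k l : nat) (hk : (0 < k)%N) (hkl : (k < l)%N)
    (g : 'M[Cx R]_(k + l)) (hg : in_U g) :
  exists v : 'cV[Cx R]_(k + l),
    in_proj_closure (@Nminus R k l) v /\ proj_fixed g v.
Proof.
pose i0 : 'I_(k + l) := Ordinal (ltn_addr l hk).
have [|||x [x0 [a ex] hx]] := @main_ind R k l g hg (k + l).+1 1%:M.
- by rewrite ltnS rank_leq_row.
- exact: submx1.
- exists (delta_mx 0 i0); split; first exact: submx1.
  by rewrite trmx_delta huu // ltrN10.
have xT0 : x^T != 0 by rewrite -trmx0 (inj_eq trmx_inj).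
exists x^T; split; first exact: closure_lem.
split => //; exists a.
by rewrite -[g]trmxK -trmx_mul ex trmxZ'.
Qed.
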